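(* Let $\Gamma$ be a group that is nilpotent of class $\le n$, let $S\subseteq\Gamma\setminus\{\mathbb{I}\}$ be a generating set, $G:=\mathrm{Cay}(\Gamma,S)$, and let $r\ge\max\{2^{n+2},10\}$ be an integer. Let $h\in S$ be an involution such that $\{\mathbb{I},h\}$ is an $r$-local $2$-separator of $G$, and suppose that $G$ has no $r$-local cutvertex. Then every element of $S$ that traverses $\{\mathbb{I},h\}$ antisymmetrically also traverses $\{\mathbb{I},h\}$ symmetrically.
   Context: Generating sets are closed under inverses; $\mathrm{Cay}(\Gamma,S)$ is the simple graph on $\Gamma$ with edges $\{g,gs\}$. $a\equiv b$ means $a=b$ or $a=b^{-1}$; $\Gamma$ is nilpotent of class $\le n$ if $[g,h]_n=\mathbb{I}$ for all $g\not\equiv h$, where $[g,h]_1=gh^{-1}g^{-1}h$ and $[g,h]_n$ is the reduced form of $g[g,h]_{n-1}^{-1}g^{-1}[g,h]_{n-1}$. Ball $B_r(v)$: subgraph of all vertices and edges on closed walks of length $\le r$ through $v$; $v$ is an $r$-local cutvertex if $B_r(v)-v$ is disconnected. For $X=\{v_0,v_1\}$, $N(X)$ is the set of vertices outside $X$ adjacent to $X$; the connectivity graph $C_r(v_0,v_1)$ has vertex set $N(X)$, $a,b$ adjacent if for some $i$ they lie in the same component of $B_r(v_i)-v_0-v_1$; $X$ is an $r$-local $2$-separator if $C_r(v_0,v_1)$ is disconnected and $d_G(v_0,v_1)\le r/2$; the $r$-local components at $X$ are the components of $C_r(v_0,v_1)$. An element $g\in S$ traverses $X$ if for some $x\in X$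 the vertices $xg^{-1}$ and $xg$ lie in distinct $r$-local components at $X$. When $h$ is an involution and $g$ traverses $\{\mathbb{I},h\}$, $g$ traverses it symmetrically if $g^{-1}$ and $hg$ lie in distinct $r$-local components at $\{\mathbb{I},h\}$, and antisymmetrically if $g^{-1}$ and $hg^{-1}$ lie in distinct $r$-local components at $\{\mathbb{I},h\}$. *)

(* Defs.v *)
From Stdlib Require Import Arith List Relations.
Import ListNotations.

Definition group_axioms {T : Type} (mul : T -> T -> T) (inv : T -> T) (one : T) : Prop :=
  (forall x y z, mul x (mul y z) = mul (mul x y) z) /\
  (forall x, mul one x = x) /\ (forall x, mul x one = x) /\
  (forall x, mul (inv x) x = one) /\ (forall x, mul x (inv x) = one).

Section LocalSep.
Variables (T : Type) (mul : T -> T -> T) (inv : T -> T) (one : T) (Sg : T -> Prop).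

(* [g,h]_0 := h, so that [g,h]_1 = g h^-1 g^-1 h and
   [g,h]_k = g [g,h]_{k-1}^-1 g^-1 [g,h]_{k-1}. *)
Fixpoint iter_comm (k : nat) (g h : T) : T :=
  match k with
  | 0 => h
  | S k' => let c := iter_comm k' g h in mul (mul (mul g (inv c)) (inv g)) c
  end.

Definition nilpotent_le (n : nat) : Prop :=
  forall g h, g <> h -> g <> inv h -> iter_comm n g h = one.

Definition generates : Prop :=
  forall x, exists l : list T, Forall Sg l /\ x = fold_right mul one l.

Definition cay_adj (x y : T) : Prop := exists s, Sg s /\ y = mul x s.

Definition is_walk (m : nat) (f : nat -> T) : Prop :=
  forall i, i < m -> cay_adj (f i) (f (i + 1)).

Definition closed_walk_at (v : T) (m : nat) (f : nat -> T) : Prop :=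
  f 0 = v /\ f m = v /\ is_walk m f.

Definition ballV (r : nat) (v x : T) : Prop :=
  exists m f, m <= r /\ closed_walk_at v m f /\ exists i, i <= m /\ f i = x.

Definition ballE (r : nat) (v a b : T) : Prop :=
  exists m f, m <= r /\ closed_walk_at v m f /\
    exists i, i < m /\ ((f i = a /\ f (i + 1) = b) \/ (f i = b /\ f (i + 1) = a)).

Definition sub_connected (V : T -> Prop) (E : T -> T -> Prop) : T -> T -> Prop :=
  clos_refl_trans T (fun x y => V x /\ V y /\ E x y).

Definition local_cutvertex (r : nat) (v : T) : Prop :=
  let V := fun z => ballV r v z /\ z <> v in
  exists x y, V x /\ V y /\ ~ sub_connected V (ballE r v) x y.

Definition nbhd2 (v0 v1 x : T) : Prop :=
  x <> v0 /\ x <> v1 /\ (cay_adj v0 x \/ cay_adj v1 x).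

Definition same_comp_ball (r : nat) (v0 v1 vi a b : T) : Prop :=
  let V := fun z => ballV r vi z /\ z <> v0 /\ z <> v1 in
  V a /\ V b /\ sub_connected V (ballE r vi) a b.

Definition conn_adj (r : nat) (v0 v1 a b : T) : Prop :=
  nbhd2 v0 v1 a /\ nbhd2 v0 v1 b /\
  (same_comp_ball r v0 v1 v0 a b \/ same_comp_ball r v0 v1 v1 a b).

Definition distinct_local_comp (r : nat) (v0 v1 a b : T) : Prop :=
  nbhd2 v0 v1 a /\ nbhd2 v0 v1 b /\ ~ clos_refl_trans T (conn_adj r v0 v1) a b.

Definition dist_le (v0 v1 : T) (k : nat) : Prop :=
  exists f, f 0 = v0 /\ f k = v1 /\ is_walk k f.

(* {v0,v1} is an r-local 2-separator; d <= r/2 written as 2d <= r *)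
Definition local_2sep (r : nat) (v0 v1 : T) : Prop :=
  (exists a b, distinct_local_comp r v0 v1 a b) /\
  (exists k, dist_le v0 v1 k /\ 2 * k <= r).

Definition traverses (r : nat) (h g : T) : Prop :=
  exists x, (x = one \/ x = h) /\ distinct_local_comp r one h (mul x (inv g)) (mul x g).

Definition traverses_sym (r : nat) (h g : T) : Prop :=
  traverses r h g /\ distinct_local_comp r one h (inv g) (mul h g).

Definition traverses_antisym (r : nat) (h g : T) : Prop :=
  traverses r h g /\ distinct_local_comp r one h (inv g) (mul h (inv g)).

End LocalSep.

(* Main.v *)
Require Import Defs.
From Stdlib Require Import Arith List Relations Lia Classical.

Section Proof8.
Variables (T : Type) (mul : T -> T -> T) (inv : T -> T) (one : T).
Hypothesis Hgrp : group_axioms mul inv one.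
Variable Sg : T -> Prop.
Hypothesis HSinv : forall s, Sg s -> Sg (inv s).

Lemma assocL x y z : mul (mul x y) z = mul x (mul y z).
Proof. destruct Hgrp as [A _]. now rewrite A. Qed.
Lemma m1l x : mul one x = x. Proof. destruct Hgrp as [_ [B _]]; apply B. Qed.
Lemma m1r x : mul x one = x. Proof. destruct Hgrp as [_ [_ [C _]]]; apply C. Qed.
Lemma mVl x : mul (inv x) x = one. Proof. destruct Hgrp as [_ [_ [_ [D _]]]]; apply D. Qed.
Lemma mVr x : mul x (inv x) = one. Proof. destruct Hgrp as [_ [_ [_ [_ E]]]]; apply E. Qed.
Lemma mVlK x y : mul (inv x) (mul x y) = y.
Proof. now rewrite <- assocL, mVl, m1l. Qed.
Lemma mVrK x y : mul x (mul (inv x) y) = y.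
Proof. now rewrite <- assocL, mVr, m1l. Qed.
Lemma cancel_l a x y : mul a x = mul a y -> x = y.
Proof. intro H. rewrite <- (mVlK a x), <- (mVlK a y), H. reflexivity. Qed.
Lemma cancel_r a x y : mul x a = mul y a -> x = y.
Proof.
  intro H. assert (E: mul (mul x a) (inv a) = mul (mul y a) (inv a)) by now rewrite H.
  now rewrite !assocL, mVr, !m1r in E.
Qed.
Lemma inv_uniq u c : mul u c = one -> u = inv c.
Proof. intro H. apply (cancel_r c). now rewrite H, mVl. Qed.
Lemma inv_inv x : inv (inv x) = x.
Proof. symmetry. apply inv_uniq. apply mVr. Qed.

Notation adj := (cay_adj T mul Sg).

Lemma adj_sym x y : adj x y -> adj y x.
Proof.
  intros [s [Hs ->]]. exists (inv s). split; [now apply HSinv|].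
  now rewrite assocL, mVr, m1r.
Qed.
Lemma adj_tr t x y : adj x y -> adj (mul t x) (mul t y).
Proof. intros [s [Hs ->]]. exists s. split; [exact Hs| now rewrite assocL]. Qed.

Variable r : nat.

Lemma back_walk v m f : is_walk T mul Sg m f -> f 0 = v -> 2 * m <= r ->
  (forall i, i <= m -> ballV T mul Sg r v (f i)) /\
  (forall i, i < m -> ballE T mul Sg r v (f i) (f (i + 1))).
Proof.
  intros Hw H0 Hr.
  set (F := fun i => if i <=? m then f i else f (2 * m - i)).
  assert (Hc : closed_walk_at T mul Sg v (2 * m) F).
  { unfold closed_walk_at, F. split; [| split].
    - simpl. exact H0.
    - destruct (Nat.leb_spec (2 * m) m).
      + replace (2 * m) with 0 by lia. exact H0.
      + replace (2 * m - 2 * m) with 0 by lia. exact H0.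
    - intros i Hi. destruct (Nat.leb_spec (i + 1) m).
      + rewrite (proj2 (Nat.leb_le i m)) by lia. apply Hw. lia.
      + destruct (Nat.leb_spec i m).
        * assert (i = m) by lia. subst i.
          replace (2 * m - (m + 1)) with (m - 1) by lia.
          replace m with (m - 1 + 1) at 1 by lia.
          apply adj_sym. apply Hw. lia.
        * replace (2 * m - i) with ((2 * m - (i + 1)) + 1) by lia.
          apply adj_sym. apply Hw. lia. }
  split.
  - intros i Hi. exists (2 * m), F. split; [lia|]. split; [exact Hc|].
    exists i. split; [lia|]. unfold F. now rewrite (proj2 (Nat.leb_le i m)).
  - intros i Hi. exists (2 * m), F. split; [lia|]. split; [exact Hc|].
    exists i. split; [lia|]. left. unfold F.
    rewrite (proj2 (Nat.leb_le i m)) by lia.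
    rewrite (proj2 (Nat.leb_le (i + 1) m)) by lia. split; reflexivity.
Qed.


Variables (h g : T).
Hypotheses (Hh : Sg h) (Hg : Sg g) (Hinvol : mul h h = one).

Lemma invh : inv h = h.
Proof. symmetry. apply inv_uniq. exact Hinvol. Qed.
Lemma hhK x : mul h (mul h x) = x.
Proof. now rewrite <- assocL, Hinvol, m1l. Qed.

Definition Lt (a : T) := a = g \/ a = inv g \/ a = h.
Definition gstep x y := exists a, Lt a /\ y = mul x a.
Definition gwalk m (f : nat -> T) := forall i, i < m -> gstep (f i) (f (i + 1)).

Lemma gstep_tr t x y : gstep x y -> gstep (mul t x) (mul t y).
Proof. intros [a [Ha ->]]. exists a. split; [exact Ha| now rewrite assocL]. Qed.
Lemma gstep_rev x y : gstep x y -> gstep y x.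
Proof.
  intros [a [Ha ->]]. exists (inv a). split.
  - destruct Ha as [->|[->| ->]]; unfold Lt.
    + right; left; reflexivity.
    + left; apply inv_inv.
    + right; right; apply invh.
  - now rewrite assocL, mVr, m1r.
Qed.
Lemma gwalk_is_walk m f : gwalk m f -> is_walk T mul Sg m f.
Proof.
  intros H i Hi. destruct (H i Hi) as [a [Ha E]]. exists a. split; [|exact E].
  destruct Ha as [->|[->| ->]]; auto.
Qed.
Lemma gwalk_tr t m f : gwalk m f -> gwalk m (fun i => mul t (f i)).
Proof. intros H i Hi. apply gstep_tr, H, Hi. Qed.
Lemma gwalk_rev m f : gwalk m f -> gwalk m (fun i => f (m - i)).
Proof.
  intros H i Hi. apply gstep_rev.
  replace (m - i) with ((m - (i + 1)) + 1) by lia. apply H. lia.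
Qed.
Lemma gwalk_single x a : Lt a -> gwalk 1 (fun i => if i =? 0 then x else mul x a).
Proof. intros Ha i Hi. assert (i = 0) by lia. subst i. simpl. exists a. auto. Qed.

Definition cat (m1 : nat) (f1 f2 : nat -> T) := fun i => if i <=? m1 then f1 i else f2 (i - m1).

Lemma gwalk_cat m1 m2 f1 f2 : gwalk m1 f1 -> gwalk m2 f2 -> f1 m1 = f2 0 ->
  gwalk (m1 + m2) (cat m1 f1 f2).
Proof.
  intros H1 H2 E i Hi. unfold cat.
  destruct (Nat.leb_spec (i + 1) m1).
  - rewrite (proj2 (Nat.leb_le i m1)) by lia. apply H1. lia.
  - destruct (Nat.leb_spec i m1).
    + assert (i = m1) by lia. subst i. rewrite E.
      replace (m1 + 1 - m1) with (0 + 1) by lia. apply H2. lia.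
    + replace (i + 1 - m1) with ((i - m1) + 1) by lia. apply H2. lia.
Qed.
Lemma cat_0 m1 f1 f2 : cat m1 f1 f2 0 = f1 0.
Proof. reflexivity. Qed.
Lemma cat_end m1 m2 f1 f2 : f1 m1 = f2 0 -> cat m1 f1 f2 (m1 + m2) = f2 m2.
Proof.
  intro E. unfold cat. destruct (Nat.leb_spec (m1 + m2) m1).
  - assert (m2 = 0) by lia. subst m2. rewrite Nat.add_0_r. exact E.
  - f_equal. lia.
Qed.

Definition cm k := iter_comm T mul inv k h g.

Lemma comm_walk k : exists f m, f 0 = one /\ f m = cm k /\ gwalk m f /\ m + 2 <= 3 * 2 ^ k.
Proof.
  induction k as [|k IH].
  - exists (fun i => if i =? 0 then one else mul one g), 1. simpl. split; [reflexivity|].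
    split; [apply m1l|]. split; [|lia]. apply gwalk_single. left; reflexivity.
  - destruct IH as [f [m [F0 [Fm [Fw Fl]]]]].
    set (c := cm k).
    set (A := fun i => if i =? 0 then one else mul one h).
    set (B := fun i => mul (mul h (inv c)) (f (m - i))).
    set (Cs := fun i => if i =? 0 then mul h (inv c) else mul (mul h (inv c)) h).
    set (D := fun i => mul (mul (mul h (inv c)) (inv h)) (f i)).
    exists (cat 1 A (cat m B (cat 1 Cs D))), (1 + (m + (1 + m))).
    assert (EA : A 1 = B 0).
    { unfold A, B. simpl. rewrite Nat.sub_0_r, Fm. fold c. now rewrite m1l, assocL, mVl, m1r. }
    assert (EB : B m = Cs 0).
    { unfold B, Cs. simpl. rewrite Nat.sub_diag, F0, m1r. reflexivity. }
    assert (EC : Cs 1 = D 0).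
    { unfold Cs, D. simpl. rewrite F0, m1r, invh. reflexivity. }
    split; [reflexivity|].
    split.
    { rewrite cat_end.
      - rewrite cat_end by exact EB. rewrite cat_end by exact EC. unfold D. rewrite Fm. reflexivity.
      - rewrite cat_0. exact EA. }
    split.
    { apply gwalk_cat.
      - apply gwalk_single. right; right; reflexivity.
      - apply gwalk_cat.
        + unfold B. apply (gwalk_tr _ _ (fun i => f (m - i))). apply gwalk_rev, Fw.
        + apply gwalk_cat.
          * apply gwalk_single. right; right; reflexivity.
          * unfold D. apply gwalk_tr, Fw.
          * exact EC.
        + rewrite cat_0. exact EB.
      - rewrite cat_0. exact EA. }
    rewrite Nat.pow_succ_r'. lia.
Qed.


Lemma engel (Hh1 : h <> one) (Hg1 : g <> one) (Hgh : g <> h) : forall k,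
  (cm k <> one /\ cm k <> h) \/
  exists j, j < k /\ cm j <> one /\ cm j <> h /\ mul (cm j) h = mul h (cm j).
Proof.
  induction k as [|k IH].
  - left. split; assumption.
  - destruct IH as [[N1 N2] | [j [Hj R]]].
    + set (c := cm k) in *.
      assert (Ec : cm (S k) = mul (mul (mul h (inv c)) (inv h)) c) by reflexivity.
      destruct (classic (cm (S k) = one)) as [E|E].
      * right. exists k. split; [lia|]. split; [exact N1|]. split; [exact N2|]. fold c.
        rewrite Ec, invh in E.
        assert (E1 : mul (mul h (inv c)) h = inv c) by (apply inv_uniq; exact E).
        assert (E2 : mul (inv c) h = mul h (inv c)).
        { rewrite <- E1 at 2. rewrite assocL, hhK. reflexivity. }
        apply (cancel_l (inv c)). rewrite mVlK.
        rewrite <- assocL, E2, assocL, mVl, m1r. reflexivity.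
      * destruct (classic (cm (S k) = h)) as [E'|E'].
        -- exfalso. apply Hh1. rewrite Ec, invh, !assocL in E'.
           assert (E3 : mul (inv c) (mul h c) = one).
           { apply (cancel_l h). rewrite m1r. exact E'. }
           apply (cancel_r c). rewrite m1l.
           rewrite <- (mVrK c (mul h c)), E3, m1r. reflexivity.
        -- left. split; assumption.
    + right. exists j. split; [lia| exact R].
Qed.


Notation BV := (ballV T mul Sg r one).
Notation BE := (ballE T mul Sg r one).
Definition Vs z := BV z /\ z <> one /\ z <> h.
Definition Cc := clos_refl_trans T (conn_adj T mul Sg r one h).
Definition Pc z := exists u, nbhd2 T mul Sg one h u /\ Cc (inv g) u /\ sub_connected T Vs BE u z.
Definition Phi z := z = one \/ (z <> one /\ z <> h /\ Pc z).
Definition Inv x := Phi x <-> ~ Phi (mul h x).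

Lemma BE_sym v a b : ballE T mul Sg r v a b -> ballE T mul Sg r v b a.
Proof.
  intros [m [f [Hm [Hc [i [Hi D]]]]]]. exists m, f. split; [exact Hm|]. split; [exact Hc|].
  exists i. split; [exact Hi|]. tauto.
Qed.

Lemma Pc_prop x y : Vs x -> Vs y -> BE x y -> Pc x -> Pc y.
Proof.
  intros Vx Vy E [u [N [C S]]]. exists u. split; [exact N|]. split; [exact C|].
  apply rt_trans with x; [exact S|]. apply rt_step. auto.
Qed.

Lemma sc_first V E a b : sub_connected T V E a b -> a = b \/ V a.
Proof.
  intro H. apply clos_rt_rt1n in H. destruct H as [|y z H _].
  - left; reflexivity.
  - right. destruct H as [H _]. exact H.
Qed.

Lemma Pc_nb u : nbhd2 T mul Sg one h u -> Vs u -> (Pc u <-> Cc (inv g) u).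
Proof.
  intros N Vu. split.
  - intros [u' [N' [C' S']]]. destruct (sc_first _ _ _ _ S') as [<-|V'].
    + exact C'.
    + apply rt_trans with u'; [exact C'|]. apply rt_step.
      split; [exact N'|]. split; [exact N|]. left.
      split; [exact V'|]. split; [exact Vu|]. exact S'.
  - intro C. exists u. split; [exact N|]. split; [exact C|]. apply rt_refl.
Qed.

Lemma Phi_nonQ z : z <> one -> z <> h -> (Phi z <-> Pc z).
Proof. unfold Phi. tauto. Qed.

Lemma hx_one x : mul h x = one -> x = h.
Proof. intro E. rewrite <- (hhK x), E, m1r. reflexivity. Qed.
Lemma hx_h x : mul h x = h -> x = one.
Proof. intro E. apply (cancel_l h). rewrite m1r. exact E. Qed.

Hypothesis Hh1 : h <> one.

Lemma Inv_one : Inv one.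
Proof.
  unfold Inv, Phi. rewrite m1r. split.
  - intros _ [E|[_ [E _]]]; auto.
  - intros _. left; reflexivity.
Qed.
Lemma Inv_h : Inv h.
Proof.
  unfold Inv, Phi. rewrite Hinvol. split.
  - intros [E|[_ [E _]]]; [contradiction| now elim E].
  - intro H. exfalso. apply H. left; reflexivity.
Qed.

Section Core.
Hypotheses (F1 : ~ Cc (inv g) (mul h (inv g))) (F2 : ~ Cc (inv g) g) (F3 : Cc (inv g) (mul h g)).
Hypotheses (Nb1 : nbhd2 T mul Sg one h (inv g)) (Nb2 : nbhd2 T mul Sg one h (mul h (inv g)))
  (Nb3 : nbhd2 T mul Sg one h g) (Nb4 : nbhd2 T mul Sg one h (mul h g)).
Hypotheses (Vb1 : BV (inv g)) (Vb2 : BV (mul h (inv g))) (Vb3 : BV g) (Vb4 : BV (mul h g)).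

Lemma nbVs u : nbhd2 T mul Sg one h u -> BV u -> Vs u.
Proof. intros [A [B _]] C. split; auto. Qed.

Lemma Phi_nb u : nbhd2 T mul Sg one h u -> BV u -> (Phi u <-> Cc (inv g) u).
Proof.
  intros N B. rewrite Phi_nonQ by (destruct N as [A [C _]]; auto).
  apply Pc_nb; [exact N| apply nbVs; auto].
Qed.

Lemma Inv_g : Inv g.
Proof. unfold Inv. rewrite (Phi_nb g), (Phi_nb (mul h g)) by auto. tauto. Qed.
Lemma Inv_gi : Inv (inv g).
Proof.
  unfold Inv. rewrite (Phi_nb (inv g)), (Phi_nb (mul h (inv g))) by auto.
  assert (Cc (inv g) (inv g)) by apply rt_refl. tauto.
Qed.
Lemma Inv_hg : Inv (mul h g).
Proof. unfold Inv. rewrite hhK, (Phi_nb g), (Phi_nb (mul h g)) by auto. tauto. Qed.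
Lemma Inv_hgi : Inv (mul h (inv g)).
Proof.
  unfold Inv. rewrite hhK, (Phi_nb (inv g)), (Phi_nb (mul h (inv g))) by auto.
  assert (Cc (inv g) (inv g)) by apply rt_refl. tauto.
Qed.

Lemma Inv_step x a : Lt a -> BV x -> BV (mul x a) -> BV (mul h x) -> BV (mul h (mul x a)) ->
  BE x (mul x a) -> BE (mul h x) (mul h (mul x a)) -> Inv x -> Inv (mul x a).
Proof.
  intros La B1 B2 B3 B4 E1 E2 I.
  destruct (classic (mul x a = one)) as [Q1|Q1]; [rewrite Q1; apply Inv_one|].
  destruct (classic (mul x a = h)) as [Q2|Q2]; [rewrite Q2; apply Inv_h|].
  destruct (classic (x = one)) as [Q3|Q3].
  { subst x. rewrite m1l in *. destruct La as [->|[->| ->]].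
    - apply Inv_g. - apply Inv_gi. - now elim Q2. }
  destruct (classic (x = h)) as [Q4|Q4].
  { subst x. destruct La as [->|[->| ->]].
    - apply Inv_hg. - apply Inv_hgi. - now elim Q1. }
  assert (R1 : mul h x <> one) by (intro E; apply Q4, hx_one, E).
  assert (R2 : mul h x <> h) by (intro E; apply Q3, hx_h, E).
  assert (R3 : mul h (mul x a) <> one) by (intro E; apply Q2, hx_one, E).
  assert (R4 : mul h (mul x a) <> h) by (intro E; apply Q1, hx_h, E).
  unfold Inv in *.
  rewrite Phi_nonQ in * by assumption.
  rewrite Phi_nonQ in I by assumption.
  rewrite Phi_nonQ by assumption.
  assert (W1 : Vs x) by (split; auto). assert (W2 : Vs (mul x a)) by (split; auto).
  assert (W3 : Vs (mul h x)) by (split; auto). assert (W4 : Vs (mul h (mul x a))) by (split; auto).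
  assert (Pc x <-> Pc (mul x a)) by (split; apply Pc_prop; auto; apply BE_sym; auto).
  assert (Pc (mul h x) <-> Pc (mul h (mul x a))) by (split; apply Pc_prop; auto; apply BE_sym; auto).
  tauto.
Qed.

Lemma Inv_walk f m : f 0 = one -> gwalk m f -> 2 * (m + 1) <= r -> forall i, i <= m -> Inv (f i).
Proof.
  intros F0 Fw Hr.
  destruct (back_walk one m f (gwalk_is_walk _ _ Fw) F0 ltac:(lia)) as [BVf BEf].
  set (A := fun i => if i =? 0 then one else mul one h).
  set (G := cat 1 A (fun i => mul h (f i))).
  assert (Gw : gwalk (1 + m) G).
  { apply gwalk_cat.
    - apply gwalk_single; right; right; reflexivity.
    - apply gwalk_tr, Fw.
    - unfold A; simpl. rewrite F0, m1l, m1r. reflexivity. }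
  assert (Gv : forall i, i <= m -> G (i + 1) = mul h (f i)).
  { intros i Hi. unfold G, cat. destruct i as [|i].
    - simpl. unfold A; simpl. rewrite F0, m1l, m1r; reflexivity.
    - destruct (Nat.leb_spec (S i + 1) 1); [lia|]. f_equal; f_equal; lia. }
  destruct (back_walk one (1 + m) G (gwalk_is_walk _ _ Gw) eq_refl ltac:(lia)) as [BVG BEG].
  induction i as [|i IH].
  - intros _. rewrite F0; apply Inv_one.
  - intros Hi. destruct (Fw i ltac:(lia)) as [a [La Ea]].
    replace (S i) with (i + 1) by lia. rewrite Ea.
    assert (E1 := BEG (i + 1) ltac:(lia)).
    rewrite Gv in E1 by lia. replace (i + 1 + 1) with ((i + 1) + 1) in E1 by lia.
    rewrite Gv in E1 by lia. rewrite Ea in E1.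
    assert (B2 := BVf (i + 1) ltac:(lia)). rewrite Ea in B2.
    assert (B3 := BVG (i + 1) ltac:(lia)). rewrite Gv in B3 by lia.
    assert (B4 := BVG (i + 1 + 1) ltac:(lia)). rewrite Gv in B4 by lia. rewrite Ea in B4.
    assert (E0 := BEf i ltac:(lia)). rewrite Ea in E0.
    apply Inv_step; auto. apply BVf; lia. apply IH; lia.
Qed.

Lemma final_contra f m y : f 0 = one -> f m = y -> gwalk m f -> 2 * (m + 1) <= r ->
  y <> one -> y <> h -> mul y h = mul h y -> False.
Proof.
  intros F0 Fm Fw Hr Y1 Y2 Yc.
  assert (I := Inv_walk f m F0 Fw Hr m (le_n m)). rewrite Fm in I.
  set (K := cat m f (fun i => if i =? 0 then y else mul y h)).
  assert (Kw : gwalk (m + 1) K).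
  { apply gwalk_cat; [exact Fw| apply gwalk_single; right; right; reflexivity| exact Fm]. }
  destruct (back_walk one (m + 1) K (gwalk_is_walk _ _ Kw) F0 ltac:(lia)) as [BVK BEK].
  assert (Km : K m = y) by (unfold K, cat; rewrite Nat.leb_refl; exact Fm).
  assert (Km1 : K (m + 1) = mul y h) by (unfold K; rewrite cat_end; [reflexivity| exact Fm]).
  assert (B1 := BVK m ltac:(lia)). rewrite Km in B1.
  assert (B2 := BVK (m + 1) ltac:(lia)). rewrite Km1 in B2.
  assert (E := BEK m ltac:(lia)). rewrite Km, Km1 in E.
  assert (R1 : mul y h <> one) by (rewrite Yc; intro E'; apply Y2, hx_one, E').
  assert (R2 : mul y h <> h) by (rewrite Yc; intro E'; apply Y1, hx_h, E').
  assert (W1 : Vs y) by (split; auto). assert (W2 : Vs (mul y h)) by (split; auto).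
  assert (Pc y <-> Pc (mul y h)) by (split; apply Pc_prop; auto; apply BE_sym; auto).
  unfold Inv in I. rewrite <- Yc in I. rewrite !Phi_nonQ in I by auto. tauto.
Qed.

End Core.


Lemma BV_tr t v z : ballV T mul Sg r v z -> ballV T mul Sg r (mul t v) (mul t z).
Proof.
  intros [m [f [Hm [[H0 [H1 Hw]] [i [Hi Hf]]]]]]. exists m, (fun i => mul t (f i)).
  split; [exact Hm|]. split.
  - split; [now rewrite H0|]. split; [now rewrite H1|]. intros j Hj; apply adj_tr, Hw, Hj.
  - exists i. split; [exact Hi| now rewrite Hf].
Qed.
Lemma BE_tr t v a b : ballE T mul Sg r v a b -> ballE T mul Sg r (mul t v) (mul t a) (mul t b).
Proof.
  intros [m [f [Hm [[H0 [H1 Hw]] [i [Hi D]]]]]]. exists m, (fun i => mul t (f i)).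
  split; [exact Hm|]. split.
  - split; [now rewrite H0|]. split; [now rewrite H1|]. intros j Hj; apply adj_tr, Hw, Hj.
  - exists i. split; [exact Hi|]. destruct D as [[A B]|[A B]]; [left|right]; rewrite A, B; split; reflexivity.
Qed.
Lemma scb_tr vi a b : same_comp_ball T mul Sg r one h vi a b ->
  same_comp_ball T mul Sg r one h (mul h vi) (mul h a) (mul h b).
Proof.
  unfold same_comp_ball. cbv zeta.
  assert (Vm : forall z, ballV T mul Sg r vi z /\ z <> one /\ z <> h ->
     ballV T mul Sg r (mul h vi) (mul h z) /\ mul h z <> one /\ mul h z <> h).
  { intros z [B [Z1 Z2]]. split; [apply BV_tr, B|]. split.
    - intro E; apply Z2, hx_one, E. - intro E; apply Z1, hx_h, E. }
  intros [Va [Vb S]]. split; [auto|]. split; [auto|].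
  unfold sub_connected in *. clear Va Vb.
  induction S as [x y [Vx [Vy Exy]] | x | x y z _ IH1 _ IH2].
  - apply rt_step. split; [auto|]. split; [auto|]. apply BE_tr, Exy.
  - apply rt_refl.
  - apply rt_trans with (mul h y); auto.
Qed.
Lemma nb_tr a : nbhd2 T mul Sg one h a -> nbhd2 T mul Sg one h (mul h a).
Proof.
  intros [A1 [A2 A3]]. split; [intro E; apply A2, hx_one, E|].
  split; [intro E; apply A1, hx_h, E|].
  destruct A3 as [Ad|Ad]; [right|left]; apply (adj_tr h) in Ad.
  - rewrite m1r in Ad. exact Ad.
  - rewrite Hinvol in Ad. exact Ad.
Qed.
Lemma Cc_tr a b : Cc a b -> Cc (mul h a) (mul h b).
Proof.
  unfold Cc. induction 1 as [x y [Na [Nb [S|S]]] | x | x y z _ IH1 _ IH2].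
  - apply rt_step. split; [apply nb_tr, Na|]. split; [apply nb_tr, Nb|].
    right. apply scb_tr in S. rewrite m1r in S. exact S.
  - apply rt_step. split; [apply nb_tr, Na|]. split; [apply nb_tr, Nb|].
    left. apply scb_tr in S. rewrite Hinvol in S. exact S.
  - apply rt_refl.
  - apply rt_trans with (mul h y); auto.
Qed.

Lemma BV_two a b : Lt a -> Lt b -> 4 <= r -> BV a /\ BV (mul a b).
Proof.
  intros La Lb Hr.
  set (f := fun i => match i with 0 => one | 1 => a | _ => mul a b end).
  assert (Fw : gwalk 2 f).
  { intros i Hi. destruct i as [|[|i]]; [| |lia]; simpl.
    - exists a. split; [exact La| now rewrite m1l].
    - exists b. split; [exact Lb| reflexivity]. }
  destruct (back_walk one 2 f (gwalk_is_walk _ _ Fw) eq_refl ltac:(lia)) as [B _].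
  split; [apply (B 1)| apply (B 2)]; lia.
Qed.

End Proof8.

Theorem proposition8p6
  (T : Type) (mul : T -> T -> T) (inv : T -> T) (one : T)
  (Hgrp : group_axioms mul inv one)
  (n : nat) (Hn : 1 <= n) (Hnil : nilpotent_le T mul inv one n)
  (Sg : T -> Prop)
  (HSinv : forall s, Sg s -> Sg (inv s))
  (HS1 : ~ Sg one)
  (Hgen : generates T mul one Sg)
  (r : nat) (Hr1 : 2 ^ (n + 2) <= r) (Hr2 : 10 <= r)
  (h : T) (Hh : Sg h) (Hinvol : mul h h = one)
  (Hsep : local_2sep T mul Sg r one h)
  (Hnocut : forall v, ~ local_cutvertex T mul Sg r v) :
  forall g, Sg g ->
    traverses_antisym T mul inv one Sg r h g ->
    traverses_sym T mul inv one Sg r h g.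
Proof.
  intros g Hsg Hanti. destruct Hanti as [Htrav [N1 [N2 F1]]].
  split; [exact Htrav|].
  assert (Hg1 : g <> one) by (intro E; rewrite E in Hsg; exact (HS1 Hsg)).
  assert (Hh1 : h <> one) by (intro E; rewrite E in Hh; exact (HS1 Hh)).
  assert (Hgh : g <> h).
  { intro E. destruct N1 as [_ [X _]]. apply X. rewrite E. apply (invh T mul inv one Hgrp h Hinvol). }
  assert (Nhg : nbhd2 T mul Sg one h (mul h g)).
  { split; [intro E; apply Hgh; apply (hx_one T mul inv one Hgrp h Hinvol); exact E|].
    split; [intro E; apply Hg1; apply (hx_h T mul inv one Hgrp h); exact E|].
    right. exists g. split; auto. }
  assert (Ng : nbhd2 T mul Sg one h g).
  { split; [exact Hg1|]. split; [exact Hgh|]. left. exists g. split; auto.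
    symmetry; apply (m1l T mul inv one Hgrp g). }
  split; [exact N1|]. split; [exact Nhg|]. intro F3.
  assert (F2 : ~ Cc T mul one Sg r h (inv g) g).
  { destruct Htrav as [x [[-> | ->] [_ [_ D]]]].
    - rewrite !(m1l T mul inv one Hgrp) in D. exact D.
    - intro C. apply D. apply Cc_tr with (inv := inv); auto. }
  assert (Hr4 : 4 <= r) by lia.
  assert (Lg : Lt T inv h g g) by (left; reflexivity).
  assert (Lgi : Lt T inv h g (inv g)) by (right; left; reflexivity).
  assert (Lh : Lt T inv h g h) by (right; right; reflexivity).
  destruct (BV_two T mul inv one Hgrp Sg HSinv r h g Hh Hsg g h Lg Lh Hr4) as [Vb3 _].
  destruct (BV_two T mul inv one Hgrp Sg HSinv r h g Hh Hsg (inv g) h Lgi Lh Hr4) as [Vb1 _].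
  destruct (BV_two T mul inv one Hgrp Sg HSinv r h g Hh Hsg h g Lh Lg Hr4) as [_ Vb4].
  destruct (BV_two T mul inv one Hgrp Sg HSinv r h g Hh Hsg h (inv g) Lh Lgi Hr4) as [_ Vb2].
  assert (Hc : iter_comm T mul inv n h g = one).
  { apply Hnil. - intro E; apply Hgh; symmetry; exact E.
    - destruct N1 as [_ [X _]]. intro E; apply X; symmetry; exact E. }
  destruct (engel T mul inv one Hgrp h g Hinvol Hh1 Hg1 Hgh n) as [[C1 _]|[j [Hj [Y1 [Y2 Yc]]]]].
  { exfalso. apply C1. exact Hc. }
  destruct (comm_walk T mul inv one Hgrp h g Hinvol j) as [f [m [F0 [Fm [Fw Fl]]]]].
  assert (Hpow : 2 ^ j * 2 <= 2 ^ n).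
  { assert (2 ^ (S j) <= 2 ^ n) by (apply Nat.pow_le_mono_r; lia).
    simpl in H. lia. }
  assert (Hpow2 : 2 ^ (n + 2) = 2 ^ n * 4).
  { rewrite Nat.pow_add_r. reflexivity. }
  assert (Hlen : 2 * (m + 1) <= r) by lia.
  exact (final_contra T mul inv one Hgrp Sg HSinv r h g Hh Hsg Hinvol Hh1 F1 F2 F3
    N1 N2 Ng Nhg Vb1 Vb2 Vb3 Vb4 f m (cm T mul inv h g j) F0 Fm Fw Hlen Y1 Y2 Yc).
Qed.
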